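(* If $S$ is an idempotent semiring satisfying $x\approx xyx+x+xyx$ (equivalently, $\mathcal{D}^{\bullet}$ is the least distributive lattice congruence on $S$), then the multiplicative reduct $(S,\cdot)$ is a normal band, i.e. $xyzx=xzyx$ for all $x,y,z\in S$.
   Context: An idempotent semiring is an algebra $(S,+,\cdot)$ with $(S,+)$, $(S,\cdot)$ bands and both distributive laws; addition not assumed commutative. $a\,\mathcal{D}^{\bullet}\,b$ iff $aba=a$ and $bab=b$. A distributive lattice congruence is a congruence $\rho$ with $S/\rho$ satisfying $x+y\approx y+x$, $xy\approx yx$, $x+xy\approx x$. *)

(* Defs.v *)
(* An idempotent semiring (S,+,.): (S,+) and (S,.) are bands (associative,
   idempotent; addition NOT assumed commutative), and both distributive laws hold. *)
Definition idempotent_semiring (S : Type) (add mul : S -> S -> S) : Prop :=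
  (forall x y z, add x (add y z) = add (add x y) z) /\
  (forall x, add x x = x) /\
  (forall x y z, mul x (mul y z) = mul (mul x y) z) /\
  (forall x, mul x x = x) /\
  (forall x y z, mul x (add y z) = add (mul x y) (mul x z)) /\
  (forall x y z, mul (add x y) z = add (mul x z) (mul y z)).

Definition normal_band (S : Type) (mul : S -> S -> S) : Prop :=
  forall x y z, mul (mul (mul x y) z) x = mul (mul (mul x z) y) x.

(* Main.v *)
Require Import Defs.
From Stdlib Require Import List.
Import ListNotations.

Section Band.
Variable S : Type.
Variable mul : S -> S -> S.
Hypothesis assoc : forall x y z, mul x (mul y z) = mul (mul x y) z.
Hypothesis idem : forall x, mul x x = x.

Fixpoint ev (a : S) (l : list S) : S :=
  match l with nil => a | b :: l' => mul a (ev b l') end.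

Lemma ev_app a l b m : ev a (l ++ b :: m) = mul (ev a l) (ev b m).
Proof.
  revert a; induction l as [|c l IH]; intro a; simpl; auto.
  rewrite IH, assoc; reflexivity.
Qed.

Lemma sq_core b w r : ev b (w ++ b :: w ++ r) = ev b (w ++ r).
Proof.
  rewrite ev_app. destruct r as [|c r].
  - rewrite app_nil_r, idem; reflexivity.
  - rewrite !ev_app, assoc, idem; reflexivity.
Qed.

Lemma sq0 a w r : ev a (w ++ a :: w ++ r) = ev a (w ++ r).
Proof. apply sq_core. Qed.

Lemma sq a l b w r : ev a (l ++ b :: w ++ b :: w ++ r) = ev a (l ++ b :: w ++ r).
Proof. rewrite (ev_app a l b (w ++ b :: w ++ r)), (ev_app a l b (w ++ r)), sq_core; reflexivity. Qed.

Lemma band_pqp x y z :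
  ev x [y;z;x;z;y;x;y;z;x] = ev x [y;z;x].
Proof.
  transitivity (ev x [y;x;y;z;x;z;y;x;y;z;x]).
  { symmetry. exact (sq0 x [y] [z;x;z;y;x;y;z;x]). }
  transitivity (ev x [y;x;y;z;x;z;y;x;y;z;x;z;x]).
  { symmetry. exact (sq x [y;x;y;z;x;z;y;x;y] z [x] []). }
  transitivity (ev x [y;x;y;z;x;z;x]).
  { exact (sq x [] y [x;y;z;x;z] [x]). }
  transitivity (ev x [y;z;x;z;x]).
  { exact (sq0 x [y] [z;x;z;x]). }
  exact (sq x [y] z [x] []).
Qed.
End Band.

Theorem theorem4p7 (S : Type) (add mul : S -> S -> S) :
  idempotent_semiring S add mul ->
  (forall x y, x = add (add (mul (mul x y) x) x) (mul (mul x y) x)) ->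
  normal_band S mul.
Proof.
  intros [aA [aI [mA [mI [dL dR]]]]] H.
  assert (P1 : forall x b, add x (mul (mul x b) x) = x).
  { intros x b. set (c := mul (mul x b) x).
    pose proof (H x b) as E. fold c in E.
    assert (G : add x c = add (add (add c x) c) c) by (rewrite <- E; reflexivity).
    rewrite G, <- aA, aI. symmetry; exact E. }
  assert (P2 : forall x b, add (mul (mul x b) x) x = x).
  { intros x b. set (c := mul (mul x b) x).
    pose proof (H x b) as E. fold c in E.
    assert (G : add c x = add c (add (add c x) c)) by (rewrite <- E; reflexivity).
    rewrite G, aA, aA, aI. symmetry; exact E. }
  assert (InT : forall x a, a = mul (mul x a) x -> mul x a = a /\ mul a x = a).
  { intros x a Ha. split.
    - assert (G : mul x a = mul x (mul (mul x a) x)) by (rewrite <- Ha; reflexivity).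
      rewrite G, mA, mA, mI. symmetry; exact Ha.
    - assert (G : mul a x = mul (mul (mul x a) x) x) by (rewrite <- Ha; reflexivity).
      rewrite G, <- mA, mI. symmetry; exact Ha. }
  assert (Xb1 : forall x b, b = mul (mul x b) x -> add x b = x).
  { intros x b Hb. rewrite Hb. apply P1. }
  assert (Xb2 : forall x b, b = mul (mul x b) x -> add b x = x).
  { intros x b Hb. rewrite Hb. apply P2. }
  assert (Comm : forall x a b, a = mul (mul x a) x -> b = mul (mul x b) x ->
                 mul a b = mul b a).
  { intros x a b Ha Hb.
    destruct (InT x a Ha) as [xa ax]. destruct (InT x b Hb) as [xb bx].
    assert (A1 : forall u v, u = mul (mul x u) x -> v = mul (mul x v) x ->
               u = add u (mul u v) /\ u = add (mul u v) u /\
               u = add u (mul v u) /\ u = add (mul v u) u).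
    { intros u v Hu Hv. destruct (InT x u Hu) as [xu ux].
      repeat split.
      - transitivity (mul u (add x v)). { rewrite (Xb1 x v Hv); symmetry; exact ux. }
        rewrite dL, ux; reflexivity.
      - transitivity (mul u (add v x)). { rewrite (Xb2 x v Hv); symmetry; exact ux. }
        rewrite dL, ux; reflexivity.
      - transitivity (mul (add x v) u). { rewrite (Xb1 x v Hv); symmetry; exact xu. }
        rewrite dR, xu; reflexivity.
      - transitivity (mul (add v x) u). { rewrite (Xb2 x v Hv); symmetry; exact xu. }
        rewrite dR, xu; reflexivity. }
    destruct (A1 a b Ha Hb) as [a1 [a2 [a3 a4]]].
    destruct (A1 b a Hb Ha) as [b1 [b2 [b3 b4]]].
    assert (F1 : mul (mul a b) a = add (mul (mul a b) a) (mul a b)).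
    { assert (G : mul (mul a b) a = mul (mul a b) (add a (mul a b))) by (rewrite <- a1; reflexivity).
      rewrite dL, mI in G. exact G. }
    assert (F2 : mul a b = add (mul (mul a b) a) (mul a b)).
    { assert (G : mul a b = mul a (add (mul b a) b)) by (rewrite <- b2; reflexivity).
      rewrite dL, mA in G. exact G. }
    assert (F3 : mul a (mul b a) = add (mul a (mul b a)) (mul b a)).
    { assert (G : mul a (mul b a) = mul (add a (mul b a)) (mul b a)) by (rewrite <- a3; reflexivity).
      rewrite dR, mI in G. exact G. }
    assert (F4 : mul b a = add (mul a (mul b a)) (mul b a)).
    { assert (G : mul b a = mul (add (mul a b) b) a) by (rewrite <- b4; reflexivity).
      rewrite dR, <- mA in G. exact G. }
    rewrite F2, <- F1, F4, <- F3, mA. reflexivity. }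
  intros x y z.
  set (p := mul (mul (mul x y) z) x).
  set (q := mul (mul (mul x z) y) x).
  assert (Hp : p = mul (mul x p) x).
  { unfold p. rewrite <- !mA. rewrite !mA, mI. rewrite <- !mA. rewrite mI. reflexivity. }
  assert (Hq : q = mul (mul x q) x).
  { unfold q. rewrite <- !mA. rewrite !mA, mI. rewrite <- !mA. rewrite mI. reflexivity. }
  assert (idemL : forall a r, mul a (mul a r) = mul a r).
  { intros a r. rewrite mA, mI. reflexivity. }
  assert (Bp : mul (mul p q) p = p).
  { pose proof (band_pqp S mul mA mI x y z) as B. simpl in B.
    unfold p, q. rewrite <- !mA. repeat rewrite idemL. exact B. }
  assert (Bq : mul (mul q p) q = q).
  { pose proof (band_pqp S mul mA mI x z y) as B. simpl in B.
    unfold p, q. rewrite <- !mA. repeat rewrite idemL. exact B. }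
  pose proof (Comm x p q Hp Hq) as C.
  assert (E1 : p = mul p q).
  { rewrite <- Bp at 1. rewrite <- mA, <- C, mA, mI. reflexivity. }
  assert (E2 : q = mul p q).
  { rewrite <- Bq at 1. rewrite <- mA, C, mA, mI. reflexivity. }
  change (p = q). rewrite E1 at 1. rewrite <- E2. reflexivity.
Qed.
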